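(* Let $p$ be an odd prime with $p\equiv 1\pmod 4$, and let $B$ be a perfect $B[-1,3](p)$ set. If $i\in B$, then $i\cdot\langle -\tfrac32\rangle\subseteq B$, where $\langle -\tfrac32\rangle$ denotes the subgroup of $\mathbb{Z}_p^\ast$ generated by $-3\cdot 2^{-1}\bmod p$.
   Context: $\mathbb{Z}_p^\ast$ is the multiplicative group of nonzero residues modulo $p$. A set $B\subseteq\mathbb{Z}_p$ is a perfect $B[-1,3](p)$ set if every nonzero element of $\mathbb{Z}_p$ has a unique representation $ab \bmod p$ with $a\in\{-1,1,2,3\}$ and $b\in B$ (and $0$ has no such representation); equivalently $B\subseteq\mathbb{Z}_p^\ast$, $|B|=(p-1)/4$, and the sets $\{-b,b,2b,3b\}$, $b\in B$, partition $\mathbb{Z}_p^\ast$. *)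

(* Defs.v *)
From HB Require Import structures.
From mathcomp Require Import all_boot all_order all_algebra.
Set Implicit Arguments. Unset Strict Implicit. Unset Printing Implicit Defensive.
Import GRing.Theory.
Local Open Scope ring_scope.

Definition mults : seq int := [:: (-1)%Z; 1%Z; 2%Z; 3%Z].

Definition nreps (p : nat) (B : {set 'F_p}) (x : 'F_p) : nat :=
  \sum_(a <- mults) #|[set b in B | ((a%:~R : 'F_p) * b == x)%R]|.

Definition perfect_Bm13 (p : nat) (B : {set 'F_p}) : Prop :=
  nreps B 0 = 0%N /\ forall x : 'F_p, x != 0 -> nreps B x = 1%N.

Definition cyc_gen (p : nat) (g : 'F_p) : {set 'F_p} :=
  [set g ^+ k | k : 'I_p].

(* Main.v *)
Require Import Defs.
From HB Require Import structures.
From mathcomp Require Import all_boot all_order all_algebra.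
From mathcomp Require Import ring zify.
Import GRing.Theory.
Local Open Scope ring_scope.

Lemma sum4 {a b c d : nat} : addn (addn (addn a b) c) d = 1%N ->
  [\/ (0 < a)%N, (0 < b)%N, (0 < c)%N | (0 < d)%N].
Proof.
case: a => [|a]; last by move=> _; apply: Or41.
case: b => [|b]; last by move=> _; apply: Or42.
case: c => [|c]; last by move=> _; apply: Or43.
by move=> e; apply: Or44; rewrite -e.
Qed.

Lemma cancel3 (F : fieldType) (c b j : F) : c != 0 -> c * b = - (c * j) -> b = - j.
Proof. by move=> nc; rewrite -mulrN => /(mulfI nc). Qed.

Section S.
Variables (p : nat) (B : {set 'F_p}).
Definition cnt (a x : 'F_p) := #|[set b in B | a * b == x]|.

Lemma nrepsE x : nreps B x = addn (addn (addn (cnt (-1) x) (cnt 1 x)) (cnt 2%:R x)) (cnt 3%:R x).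
Proof.
rewrite /nreps /mults !big_cons big_nil addn0 /cnt !addnA.
by [].
Qed.

Lemma cnt_pos (a x b : 'F_p) : b \in B -> a * b = x -> (0 < cnt a x)%N.
Proof.
move=> Hb Hx; rewrite /cnt card_gt0; apply/set0Pn; exists b.
by rewrite inE Hb /= Hx eqxx.
Qed.

Lemma cnt_ex a x : (0 < cnt a x)%N -> exists2 b, b \in B & a * b = x.
Proof.
rewrite /cnt card_gt0 => /set0Pn [b]; rewrite inE => /andP [Hb /eqP Hx].
by exists b.
Qed.

Lemma step (j : 'F_p) : prime p -> p = 1 %[mod 4] -> perfect_Bm13 B -> j \in B ->
  j * (- 3%:R / 2%:R) \in B.
Proof.
move=> pr p4 [H0 H] jB.
have p5 : (4 < p)%N.
  have := prime_gt1 pr; move: p4; move: pr.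
  case: p => [|[|[|[|[|q]]]]] //.
have n2 : (2%:R : 'F_p) != 0.
  rewrite -(dvdn_pcharf (pchar_Fp pr)); apply/negP => /dvdn_leq; lia.
have n3 : (3%:R : 'F_p) != 0.
  rewrite -(dvdn_pcharf (pchar_Fp pr)); apply/negP => /dvdn_leq; lia.
have nj : j != 0.
  apply/negP => /eqP j0; have := cnt_pos 1 0 j jB.
  rewrite mul1r j0 => /(_ erefl) c; move: H0; rewrite nrepsE; lia.
have n3j : 3%:R * j != 0 by rewrite mulf_neq0.
have nx : - (3%:R * j) != 0 by rewrite oppr_eq0.
have H1 := H _ nj; have H3 := H _ n3j; have Hx := H _ nx.
rewrite nrepsE in H1; rewrite nrepsE in H3; rewrite nrepsE in Hx.
have c3 := cnt_pos (3%:R) _ _ jB erefl.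
have c1 := cnt_pos (1) _ _ jB (mul1r j).
set x := - (3%:R * j) in Hx *.
have := sum4 Hx.
case=> /cnt_ex [b bB hb].
- have e : 1 * b = 3%:R * j by apply: oppr_inj; rewrite mul1r -mulN1r hb.
  have := cnt_pos 1 _ _ bB e; lia.
- have e : -1 * b = 3%:R * j by rewrite mulN1r -[b]mul1r hb opprK.
  have := cnt_pos (-1) _ _ bB e; lia.
- suff -> : j * (- 3%:R / 2%:R) = b by [].
  apply: (mulfI n2); apply: (etrans _ (esym hb)); rewrite /x.
  by rewrite mulrCA (mulrCA 2%:R) divff // mulr1 mulrN mulrC.
- have eb : b = - j := cancel3 _ _ _ _ n3 hb.
  have e : -1 * b = j by rewrite eb mulN1r opprK.
  have := cnt_pos (-1) _ _ bB e; lia.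
Qed.
End S.


Theorem theorem4p3 (p : nat) (B : {set 'F_p}) (i : 'F_p) :
  prime p -> odd p -> p = 1 %[mod 4] ->
  perfect_Bm13 B -> i \in B ->
  forall y : 'F_p, y \in cyc_gen (- 3%:R / 2%:R : 'F_p) -> i * y \in B.
Proof.
move=> pr _ p4 hB iB y; rewrite /cyc_gen => /imsetP [k _ ->].
elim: (nat_of_ord k) => [|n IH]; first by rewrite expr0 mulr1.
rewrite exprSr mulrA; exact: step.
Qed.
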